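(* Assume (L). Let $\beta\in(0,1/2)$ and let $\nu,\psi$ satisfy $0<\nu\le \frac23(\frac12-\beta)$ and $0<\psi\le\frac{1/2-\beta}{3/2-\beta}$. Let $x\in\mathcal N_\nu$ and let $\tilde H$ be a symmetric matrix with $(1-\psi)H(x)\preceq\tilde H\preceq(1+\psi)H(x)$, and put $p=-\tilde H^{-1}\nabla f(x)$. Then $$f(x+p)\le f(x)+\beta\nabla f(x)^\top p,$$ i.e., the Armijo condition holds with unit stepsize, so in the Algorithm (if $x_t=x$ and $\tilde H_t=\tilde H$) the backtracking line search returns $\mu_t=1$.
   Context: $f:\mathbb{R}^d\to\mathbb{R}$ is twice continuously differentiable with Hessian $H(x)=\nabla^2 f(x)$ satisfying $\lambda_{\min} I\preceq H(x)\preceq \lambda_{\max} I$ for all $x$, where $0<\lambda_{\min}\le\lambda_{\max}$; $x^\star$ is the unique minimizer of $f$ and $H^\star=H(x^\star)$. $\|\cdot\|$ is the Euclidean/spectral norm; $\|v\|_A=\sqrt{v^\top Av}$ for $A\succeq 0$. Lipschitz Hessian assumption (L): $\|H(x)-H(y)\|\le L\|x-y\|$ for all $x,y$. Neighborhood: $\mathcal N_\nu=\{x:\|x-x^\star\|_{H^\star}\le \nu\lambda_{\min}^{3/2}/L\}$. The Algorithm's line search: given direction $p_t$ with $\nabla f(x_t)^\top p_t<0$, $\mu_t=\rho^{j_t}$ with $\rho\in(0,1)$ and $j_t$ the smallest nonnegative integer such that $f(x_t+\mu_tp_t)\le f(x_t)+\mu_t\beta\nabla f(x_t)^\top p_t$.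 *)

(* Defs.v *)
From HB Require Import structures.
From mathcomp Require Import all_boot all_order all_algebra.
From mathcomp Require Import all_classical all_reals all_analysis.
Set Implicit Arguments. Unset Strict Implicit. Unset Printing Implicit Defensive.
Import Order.TTheory GRing.Theory Num.Theory.
Import numFieldNormedType.Exports.
Local Open Scope ring_scope.

Definition dotv (R : realType) (d : nat) (u v : 'cV[R]_d) : R := (u^T *m v) 0 0.

Definition enorm (R : realType) (d : nat) (v : 'cV[R]_d) : R := Num.sqrt (dotv v v).

Definition anorm (R : realType) (d : nat) (A : 'M[R]_d) (v : 'cV[R]_d) : R :=
  Num.sqrt (dotv v (A *m v)).

Definition loewner_le (R : realType) (d : nat) (A B : 'M[R]_d) : Prop :=
  forall v : 'cV[R]_d, 0 <= dotv v ((B - A) *m v).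

(* spectral-norm bound ||A|| <= c, unfolded: ||A v|| <= c ||v|| for all v *)
Definition opnorm_le (R : realType) (d : nat) (A : 'M[R]_d) (c : R) : Prop :=
  forall v : 'cV[R]_d, enorm (A *m v) <= c * enorm v.

(* Main.v *)
Require Import Defs.
From HB Require Import structures.
From mathcomp Require Import all_boot all_order all_algebra.
From mathcomp Require Import all_classical all_reals all_analysis.
From mathcomp Require Import ring lra.
Import Order.TTheory GRing.Theory Num.Theory.
Import numFieldNormedType.Exports.
Local Open Scope ring_scope.
Set Implicit Arguments. Unset Strict Implicit.

Lemma dotv_sum (R : realType) (d : nat) (u v : 'cV[R]_d) :
  dotv u v = \sum_i u i 0 * v i 0.
Proof. by rewrite /dotv mxE; apply: eq_bigr => i _; rewrite mxE. Qed.

Lemma dotvC (R : realType) (d : nat) (u v : 'cV[R]_d) : dotv u v = dotv v u.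
Proof. by rewrite !dotv_sum; apply: eq_bigr => i _; rewrite mulrC. Qed.

Lemma dotv_diff (R : realType) (d : nat) (v w : 'cV[R]_d) :
  differentiable (fun u : 'cV[R]_d => dotv u v) w.
Proof.
have -> : (fun u : 'cV[R]_d => dotv u v) = \sum_(i < d) (fun u : 'cV[R]_d => v i 0 *: u i 0).
  by apply/funext => u; rewrite dotv_sum fct_sumE; apply: eq_bigr => i _; rewrite mulrC.
apply: differentiable_sum => i.
by apply: differentiableZ; apply: differentiable_coord.
Qed.
Lemma dotv_dval (R : realType) (d : nat) (v w : 'cV[R]_d) :
  'd (fun u : 'cV[R]_d => dotv u v) w = (fun h => dotv h v) :> ('cV[R]_d -> R).
Proof.
have lin : linear (fun u : 'cV[R]_d => dotv u v).
  by move=> a x y; rewrite /dotv linearP /= mulmxDl -scalemxAl !mxE.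
pose lM := GRing.isLinear.Build _ _ _ _ _ lin.
pose fL : {linear 'cV[R]_d -> R} := HB.pack (fun u : 'cV[R]_d => dotv u v) lM.
have -> : (fun u : 'cV[R]_d => dotv u v) = fL by [].
apply: diff_lin => x; apply: differentiable_continuous; exact: dotv_diff.
Qed.
Lemma line_diff (R : realType) (d : nat) (y v : 'cV[R]_d) (t : R) :
  differentiable (fun s : R => y + s *: v) t /\
  'd (fun s : R => y + s *: v) t 1 = v.
Proof.
have hs : is_diff t (fun s : R => s *: v) (fun s : R => s *: v) by exact: is_diff_scalel.
have hc : is_diff t (fun _ : R => y) (fun _ : R => 0) by exact: is_diff_cst.
have h := is_diffD hc hs.
split; first by case: h.
Timeout 20 rewrite (diff_val (is_diff_def := h)).
by rewrite /= add0r scale1r.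
Qed.


Lemma comp_line (R : realType) (d : nat) (W : normedModType R) (F : 'cV[R]_d -> W)
  (y v : 'cV[R]_d) (t : R) : differentiable F (y + t *: v) ->
  differentiable (fun s : R => F (y + s *: v)) t /\
  'd (fun s : R => F (y + s *: v)) t 1 = 'd F (y + t *: v) v.
Proof.
move=> dF; have [dl vl] := @line_diff R d y v t.
split; first exact: (@differentiable_comp R R _ W (fun s : R => y + s *: v) F t dl dF).
Timeout 30 rewrite (@diff_comp R R _ W (fun s : R => y + s *: v) F t dl dF).
by rewrite /= vl.
Qed.

Lemma comp_line1 (R : realType) (d : nat) (F : 'cV[R]_d -> R)
  (y v : 'cV[R]_d) (t : R) : differentiable F (y + t *: v) ->
  derivable (fun s : R => F (y + s *: v)) t 1 /\
  derive1 (fun s : R => F (y + s *: v)) t = 'd F (y + t *: v) v.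
Proof.
move=> dF; have [h1 h2] := @comp_line R d R F y v t dF.
split; first exact/derivable1_diffP.
by rewrite derive1E' // h2.
Qed.
Lemma is_derive_cub (R : realType) (F : R -> R) (dF a b c e t : R) :
  is_derive t 1 F dF ->
  is_derive t 1 (fun s => F s - (a + s * b + s * s * c + s * s * s * e))
    (dF - (b + 2 * t * c + 3 * (t * t) * e)).
Proof.
move=> hF.
have hi := is_derive_id t (1:R).
have hc := fun k : R => is_derive_cst k t (1:R).
have h := is_deriveB hF (is_deriveD (is_deriveD (is_deriveD (hc a)
   (is_deriveM hi (hc b))) (is_deriveM (is_deriveM hi hi) (hc c)))
   (is_deriveM (is_deriveM (is_deriveM hi hi) hi) (hc e))).
apply: (is_derive_eq h).
rewrite /= /cst !scaler0 ![_%:A]mulr1.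
have E : forall x y : R, @GRing.scale _ (numFieldNormedType.NumField_sort__canonical__GRing_LSemiModule R) x y = x * y by []. rewrite !E /=. have E2 : (@id R * id) t = t * t by []. rewrite E2. ring.
Qed.
Lemma nonincr01 (R : realType) (h dh : R -> R) :
  (forall t : R, is_derive t (1:R) h (dh t)) -> (forall t, 0 < t < 1 -> dh t <= 0) ->
  forall s, 0 <= s <= 1 -> h s <= h 0.
Proof.
move=> hd hneg s /andP[s0 s1].
have der : forall x, x \in `]0, 1[%R -> derivable h x 1.
  by move=> x _; case: (hd x).
have dle : forall x, x \in `]0, 1[%R -> derive1 h x <= 0.
  move=> x; rewrite in_itv /= => hx.
  rewrite derive1E; case: (hd x) => _ ->; exact: hneg.
have cont := @derivable_within_continuous R R h `[0, 1]%R (fun x _ => @ex_derive _ _ _ _ _ _ _ (hd x)).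
apply: (@ler0_derive1_le_cc R h 0 1 der dle cont).
  all: rewrite ?in_itv /= ?s0 ?s1 ?lexx ?ler01 //.
Qed.

Lemma dotvDl (R : realType) (d : nat) (u v w : 'cV[R]_d) :
  dotv (u + v) w = dotv u w + dotv v w.
Proof. by rewrite /dotv linearD /= mulmxDl mxE. Qed.
Lemma dotvZl (R : realType) (d : nat) (a : R) (u w : 'cV[R]_d) :
  dotv (a *: u) w = a * dotv u w.
Proof. by rewrite /dotv linearZ /= -scalemxAl mxE. Qed.
Lemma dotvNl (R : realType) (d : nat) (u w : 'cV[R]_d) :
  dotv (- u) w = - dotv u w.
Proof. by rewrite -scaleN1r dotvZl mulN1r. Qed.
Lemma dotvBl (R : realType) (d : nat) (u v w : 'cV[R]_d) :
  dotv (u - v) w = dotv u w - dotv v w.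
Proof. by rewrite dotvDl dotvNl. Qed.
Lemma dotvDr (R : realType) (d : nat) (u v w : 'cV[R]_d) :
  dotv w (u + v) = dotv w u + dotv w v.
Proof. by rewrite dotvC dotvDl !(dotvC _ w). Qed.
Lemma dotvZr (R : realType) (d : nat) (a : R) (u w : 'cV[R]_d) :
  dotv w (a *: u) = a * dotv w u.
Proof. by rewrite dotvC dotvZl dotvC. Qed.
Lemma dotvBr (R : realType) (d : nat) (u v w : 'cV[R]_d) :
  dotv w (u - v) = dotv w u - dotv w v.
Proof. by rewrite dotvC dotvBl !(dotvC _ w). Qed.
Lemma dotv_ge0 (R : realType) (d : nat) (u : 'cV[R]_d) : 0 <= dotv u u.
Proof. by rewrite dotv_sum; apply: sumr_ge0 => i _; rewrite -expr2 sqr_ge0. Qed.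
Lemma dotv0_eq (R : realType) (d : nat) (u w : 'cV[R]_d) :
  dotv u u = 0 -> dotv u w = 0.
Proof.
rewrite !dotv_sum => /eqP; rewrite psumr_eq0; last by move=> i _; rewrite -expr2 sqr_ge0.
move=> /allP H; apply: big1 => i _.
have := H i (mem_index_enum i); rewrite -expr2 sqrf_eq0 => /eqP ->.
by rewrite mul0r.
Qed.
Lemma enorm_sq (R : realType) (d : nat) (u : 'cV[R]_d) : enorm u ^+ 2 = dotv u u.
Proof. by rewrite /enorm sqr_sqrtr // dotv_ge0. Qed.
Lemma enorm_ge0 (R : realType) (d : nat) (u : 'cV[R]_d) : 0 <= enorm u.
Proof. by rewrite /enorm sqrtr_ge0. Qed.
Lemma enormZ (R : realType) (d : nat) (a : R) (u : 'cV[R]_d) :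
  enorm (a *: u) = `|a| * enorm u.
Proof.
by rewrite /enorm dotvZl dotvZr mulrA -expr2 sqrtrM ?sqr_ge0 // sqrtr_sqr.
Qed.

Lemma CS (R : realType) (d : nat) (u w : 'cV[R]_d) :
  dotv u w <= enorm u * enorm w.
Proof.
set A := dotv u u; set B := dotv w w; set C := dotv u w.
have hB := dotv_ge0 w.
suff h : C ^+ 2 <= A * B.
  apply: (le_trans (ler_norm C)).
  rewrite /enorm -sqrtrM ?dotv_ge0 // -(sqrtr_sqr C).
  by rewrite ler_sqrt // mulr_ge0 // dotv_ge0.
have [B0|Bpos] := eqVneq B 0.
  have := dotv0_eq u B0; rewrite dotvC -/C => ->.
  by rewrite B0 mulr0 expr0n.
have Bp : 0 < B by rewrite lt_def Bpos hB.
have := dotv_ge0 (B *: u - C *: w).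
rewrite !dotvBl !dotvBr !dotvZl !dotvZr (dotvC w u) -/A -/B -/C => h.
have : 0 <= B * (A * B - C ^+ 2) by lra.
by rewrite pmulr_rge0 // subr_ge0.
Qed.


Lemma taylor (R : realType) (d : nat)
  (f : 'cV[R]_d -> R) (g : 'cV[R]_d -> 'cV[R]_d) (H : 'cV[R]_d -> 'M[R]_d) (L : R)
  (hf : forall x, differentiable f x /\ forall v, 'd f x v = dotv (g x) v)
  (hg : forall x, differentiable g x /\ forall v, 'd g x v = H x *m v)
  (hL : forall x y, opnorm_le (H x - H y) (L * enorm (x - y)))
  (y v : 'cV[R]_d) :
  f (y + v) <= f y + dotv (g y) v + dotv v (H y *m v) / 2 + L * enorm v ^+ 3 / 6.
Proof.
pose phi := fun t : R => f (y + t *: v).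
pose psi := fun t : R => dotv (g (y + t *: v)) v.
have hphi : forall t : R, is_derive t (1:R) phi (psi t).
  move=> t; have [df dv] := hf (y + t *: v).
  have [h1 h2] := comp_line1 df.
  apply: DeriveDef => //; by rewrite -derive1E h2 dv.
have hpsi : forall t : R, is_derive t (1:R) psi (dotv (H (y + t *: v) *m v) v).
  move=> t; have [dg dgv] := hg (y + t *: v).
  have dF : differentiable (fun z => dotv (g z) v) (y + t *: v).
    exact: (differentiable_comp dg (dotv_diff v (g (y + t *: v)))).
  have [h1 h2] := comp_line1 dF.
  apply: DeriveDef => //; rewrite -derive1E h2.
  have -> : (fun z => dotv (g z) v) = (fun u => dotv u v) \o g by [].
  by rewrite (diff_comp dg (dotv_diff v (g (y + t *: v)))) /= dotv_dval dgv.
set q := dotv (H y *m v) v.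
set c := L * enorm v ^+ 3.
have hk := fun t => is_derive_cub (psi 0) q (c / 2) 0 (hpsi t).
have kle : forall s, 0 <= s <= 1 ->
    psi s - (psi 0 + s * q + s * s * (c / 2) + s * s * s * 0) <= 0.
  move=> s hs.
  have := nonincr01 hk _ hs.
  have -> : psi 0 - (psi 0 + 0 * q + 0 * 0 * (c / 2) + 0 * 0 * 0 * 0) = 0 by ring.
  apply => t /andP[t0 t1].
  have e1 : dotv (H (y + t *: v) *m v) v - q
      = dotv v ((H (y + t *: v) - H y) *m v).
    by rewrite mulmxBl dotvBr /q !(dotvC v).
  have hb := hL (y + t *: v) y v.
  have e2 : y + t *: v - y = t *: v by rewrite addrC addKr.
  rewrite /opnorm_le e2 enormZ ger0_norm ?(ltW t0) // in hb.
  have hcs := CS v ((H (y + t *: v) - H y) *m v).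
  have hv := enorm_ge0 v.
  have : dotv v ((H (y + t *: v) - H y) *m v) <= enorm v * (L * (t * enorm v) * enorm v).
    apply: (le_trans hcs); exact: (ler_wpM2l hv hb).
  rewrite -e1 => h3.
  suff : enorm v * (L * (t * enorm v) * enorm v) = t * c by move=> h4; lra.
  by rewrite /c; ring.
have hh := fun t => is_derive_cub (phi 0) (psi 0) (q / 2) (c / 6) (hphi t).
have := nonincr01 hh _ (_ : 0 <= 1 <= 1).
have -> : phi 0 - (phi 0 + 0 * psi 0 + 0 * 0 * (q / 2) + 0 * 0 * 0 * (c / 6)) = 0 by ring.
move=> /(_ _ _) h.
have h1 : phi 1 - (phi 0 + 1 * psi 0 + 1 * 1 * (q / 2) + 1 * 1 * 1 * (c / 6)) <= 0.
  apply: h; last by rewrite ler01 lexx.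
  move=> t /andP[t0 t1].
  have ht : 0 <= t <= 1 by rewrite !ltW.
  have := kle t ht.
  lra.
have e0 : phi 0 = f y by rewrite /phi scale0r addr0.
have e1 : phi 1 = f (y + v) by rewrite /phi scale1r.
have e3 : psi 0 = dotv (g y) v by rewrite /psi scale0r addr0.
rewrite -e0 -e1 -e3 (dotvC v) -/q.
lra.
Qed.


Lemma phi_deriv (R : realType) (d : nat)
  (f : 'cV[R]_d -> R) (g : 'cV[R]_d -> 'cV[R]_d)
  (hf : forall x, differentiable f x /\ forall v, 'd f x v = dotv (g x) v)
  (y v : 'cV[R]_d) (t : R) :
  is_derive t (1:R) (fun s : R => f (y + s *: v)) (dotv (g (y + t *: v)) v).
Proof.
have [df dv] := hf (y + t *: v).
have [h1 h2] := comp_line1 df.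
apply: DeriveDef => //; by rewrite -derive1E h2 dv.
Qed.

Lemma fermat (R : realType) (d : nat)
  (f : 'cV[R]_d -> R) (g : 'cV[R]_d -> 'cV[R]_d)
  (hf : forall x, differentiable f x /\ forall v, 'd f x v = dotv (g x) v)
  (xs : 'cV[R]_d) (hmin : forall y, f xs <= f y) (v : 'cV[R]_d) :
  dotv (g xs) v = 0.
Proof.
have h1 := phi_deriv hf xs v 0.
have h2 : is_derive (0:R) (1:R) (fun s : R => f (xs + s *: v)) 0.
  apply: (@derive1_at_min R _ (-1) 1 0).
  - lra.
  - by move=> t _; case: (phi_deriv hf xs v t).
  - by rewrite in_itv /=; apply/andP; split; lra.
  - by move=> t _; rewrite scale0r addr0.
have := @derive_val _ _ _ _ _ _ _ h1.
rewrite (@derive_val _ _ _ _ _ _ _ h2) scale0r addr0 => <-.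
by [].
Qed.

Lemma dotv_eq0 (R : realType) (d : nat) (u : 'cV[R]_d) : dotv u u = 0 -> u = 0.
Proof.
rewrite dotv_sum => /eqP; rewrite psumr_eq0; last by move=> i _; rewrite -expr2 sqr_ge0.
move=> /allP H; apply/matrixP => i j; rewrite (ord1 j) mxE.
have := H i (mem_index_enum i); rewrite -expr2 sqrf_eq0 => /eqP ->.
by [].
Qed.

Lemma qfB (R : realType) (d : nat) (A B : 'M[R]_d) (v : 'cV[R]_d) :
  dotv v ((A - B) *m v) = dotv v (A *m v) - dotv v (B *m v).
Proof. by rewrite mulmxBl dotvBr. Qed.

Lemma qfZ (R : realType) (d : nat) (a : R) (A : 'M[R]_d) (v : 'cV[R]_d) :
  dotv v ((a *: A) *m v) = a * dotv v (A *m v).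
Proof. by rewrite -scalemxAl dotvZr. Qed.

Lemma qfS (R : realType) (d : nat) (a : R) (v : 'cV[R]_d) :
  dotv v (a%:M *m v) = a * dotv v v.
Proof. by rewrite mul_scalar_mx dotvZr. Qed.

Lemma unit_of_pd (R : realType) (d : nat) (A : 'M[R]_d) (c : R) :
  A^T = A -> 0 < c -> (forall v, c * dotv v v <= dotv v (A *m v)) ->
  A \in unitmx.
Proof.
move=> hs hc hpd; rewrite -row_free_unit; apply: inj_row_free => u hu.
have hw : A *m u^T = 0.
  by rewrite -{1}hs -trmx_mul hu trmx0.
have := hpd u^T; rewrite hw.
have -> : dotv u^T 0 = 0 by rewrite /dotv mulmx0 mxE.
move=> h.
have h0 : dotv u^T u^T = 0.
  have := dotv_ge0 u^T; nra.
have := dotv_eq0 h0 => /(congr1 trmx); by rewrite trmxK trmx0.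
Qed.

Unset Implicit Arguments. Set Strict Implicit.

Theorem mainTheorem5 (R : realType) (d : nat)
  (f : 'cV[R]_d -> R) (g : 'cV[R]_d -> 'cV[R]_d) (H : 'cV[R]_d -> 'M[R]_d)
  (lmin lmax L : R) (xstar : 'cV[R]_d)
  (* f is C^2 with gradient g and Hessian H *)
  (hf : forall x, differentiable f x /\ forall v, 'd f x v = dotv (g x) v)
  (hg : forall x, differentiable g x /\ forall v, 'd g x v = H x *m v)
  (hHc : continuous H)
  (* spectral bounds on the Hessian *)
  (hlmin : 0 < lmin) (hlminmax : lmin <= lmax)
  (hHb : forall x, loewner_le (lmin%:M) (H x) /\ loewner_le (H x) (lmax%:M))
  (* x* is the unique minimizer of f *)
  (hxmin : forall y, f xstar <= f y)
  (hxuniq : forall y, (forall z, f y <= f z) -> y = xstar)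
  (* assumption (L): Lipschitz Hessian *)
  (hL0 : 0 <= L)
  (hL : forall x y, opnorm_le (H x - H y) (L * enorm (x - y)))
  (beta nu psi : R)
  (hbeta : 0 < beta < 1 / 2)
  (hnu : 0 < nu <= 2 / 3 * (1 / 2 - beta))
  (hpsi : 0 < psi <= (1 / 2 - beta) / (3 / 2 - beta))
  (x : 'cV[R]_d)
  (* x in N_nu : ||x - x*||_{H*} <= nu lmin^{3/2} / L, written multiplicatively *)
  (hx : L * anorm (H xstar) (x - xstar) <= nu * (lmin * Num.sqrt lmin))
  (Ht : 'M[R]_d)
  (hHt_sym : Ht^T = Ht)
  (hHt : loewner_le ((1 - psi) *: H x) Ht /\ loewner_le Ht ((1 + psi) *: H x)) :
  let p := - (invmx Ht *m g x) in
  f (x + p) <= f x + beta * dotv (g x) p.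
Proof.
cbv zeta; set p := - (invmx Ht *m g x).
case/andP: hbeta => hb0 hb1.
case/andP: hnu => hn0 hn1.
case/andP: hpsi => hp0 hp1.
have hps : psi * (3 / 2 - beta) <= 1 / 2 - beta.
  by rewrite -ler_pdivlMr //; lra.
have hpsi3 : psi <= 1 / 3 by nra.
have hlow : forall y v, lmin * dotv v v <= dotv v (H y *m v).
  move=> y v; have := (hHb y).1 v; rewrite qfB qfS; lra.
set e := x - xstar.
set Q := dotv e (H xstar *m e).
set ee := dotv e e.
have hee : 0 <= ee by exact: dotv_ge0.
have hQe : lmin * ee <= Q by exact: hlow.
have hQ0 : 0 <= Q by nra.
have hx2 : L ^+ 2 * Q <= nu ^+ 2 * lmin ^+ 3.
  have s1 := sqr_sqrtr hQ0.
  have s2 := sqr_sqrtr (ltW hlmin).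
  have q1 := sqrtr_ge0 Q. have q2 := sqrtr_ge0 lmin.
  move: hx; rewrite /anorm -/e -/Q => hx.
  have hxa : 0 <= L * Num.sqrt Q by nra.
  have := ler_pM hxa hxa hx hx.
  have -> : L * Num.sqrt Q * (L * Num.sqrt Q) = L ^+ 2 * Num.sqrt Q ^+ 2 by ring.
  have -> : nu * (lmin * Num.sqrt lmin) * (nu * (lmin * Num.sqrt lmin))
     = nu ^+ 2 * lmin ^+ 2 * Num.sqrt lmin ^+ 2 by ring.
  rewrite s1 s2. by have -> : nu ^+ 2 * lmin ^+ 2 * lmin = nu ^+ 2 * lmin ^+ 3 by field.
have hxe : xstar + e = x by rewrite /e addrC subrK.
have ht0 := taylor hf hg hL xstar e.
rewrite hxe (fermat hf hxmin e) -/Q addr0 in ht0.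
set ne := enorm e in ht0.
have hne : 0 <= ne by exact: enorm_ge0.
have hne2 : ne ^+ 2 = ee by exact: enorm_sq.
have hA : L ^+ 2 * ee <= nu ^+ 2 * lmin ^+ 2.
  rewrite -(ler_pM2l hlmin).
  apply: le_trans (_ : L ^+ 2 * Q <= _).
    have hL2 : 0 <= L ^+ 2 by rewrite sqr_ge0.
    have := ler_wpM2l hL2 hQe; lra.
  have -> : lmin * (nu ^+ 2 * lmin ^+ 2) = nu ^+ 2 * lmin ^+ 3 by field.
  exact: hx2.
have hLe : L * ne <= nu * lmin.
  have h0 : 0 <= nu * lmin by nra.
  have h1 : (L * ne) ^+ 2 <= (nu * lmin) ^+ 2.
    by rewrite !exprMn hne2.
  have h2 : 0 <= L * ne by nra.
  nra.
have hL3 : L * ne ^+ 3 <= nu * Q.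
  have -> : L * ne ^+ 3 = (L * ne) * ne ^+ 2 by ring.
  rewrite hne2.
  have h1 := ler_wpM2r hee hLe.
  apply: (le_trans h1).
  have := ler_wpM2l (ltW hn0) hQe; lra.
have hF : f x <= f xstar + Q / 2 + nu * Q / 6 by lra.
have hpd : forall v, ((1 - psi) * lmin) * dotv v v <= dotv v (Ht *m v).
  move=> v; have := hHt.1 v; rewrite qfB qfZ => h.
  have := hlow x v; have hv := dotv_ge0 v.
  have h1 : 0 <= 1 - psi by lra.
  move=> h2; have := ler_wpM2l h1 h2; lra.
have hc : 0 < (1 - psi) * lmin by apply: mulr_gt0 => //; lra.
have hU := unit_of_pd hHt_sym hc hpd.
have hgp : g x = - (Ht *m p).
  by rewrite /p mulmxN mulmxA mulmxV // mul1mx opprK.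
set a := dotv p (Ht *m p).
set b := dotv p (H x *m p).
set rr := dotv p p.
have hga : dotv (g x) p = - a by rewrite hgp dotvNl dotvC.
have hab : (1 - psi) * b <= a.
  have := hHt.1 p; rewrite qfB qfZ -/a -/b; lra.
have hbr : lmin * rr <= b by exact: hlow.
have hrr : 0 <= rr by exact: dotv_ge0.
set r := enorm p.
have hr0 : 0 <= r by exact: enorm_ge0.
have hr2 : r ^+ 2 = rr by exact: enorm_sq.
have hbp : 0 <= b by nra.
have ha0 : 0 <= a by nra.
have hT : forall s, 0 <= s ->
    f (x + s *: p) <= f x - s * a + s ^+ 2 * b / 2 + L * s ^+ 3 * r ^+ 3 / 6.
  move=> s hs; have := taylor hf hg hL x (s *: p).
  rewrite dotvZr hga -scalemxAr dotvZl dotvZr -/b enormZ ger0_norm // -/r.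
  have -> : L * (s * r) ^+ 3 = L * s ^+ 3 * r ^+ 3 by ring.
  have -> : s * (s * b) = s ^+ 2 * b by ring.
  lra.
have ha2 : 2 / 3 * (lmin * rr) <= a.
  have : 2 / 3 * b <= (1 - psi) * b by nra.
  lra.
have hb32 : b <= 3 / 2 * a.
  have : 2 / 3 * b <= (1 - psi) * b by nra.
  lra.
have hLr : L * r <= 3 * nu * lmin.
  rewrite leNgt; apply/negP => hlt.
  have hLp : 0 < L.
    rewrite lt_def hL0 andbT; apply/negP => /eqP L0.
    move: hlt; rewrite L0 mul0r; nra.
  have hrp : 0 < r.
    rewrite lt_def hr0 andbT; apply/negP => /eqP r0.
    move: hlt; rewrite r0 mulr0; nra.
  set u := 2 * nu * lmin / L.
  have hLu : L * u = 2 * nu * lmin by rewrite /u mulrC divfK // gt_eqF.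
  set s := u / r.
  have hsr : s * r = u by rewrite /s divfK // gt_eqF.
  have hu0 : 0 < u by rewrite /u; apply: divr_gt0 => //; nra.
  have hs0 : 0 < s by rewrite /s divr_gt0.
  have hur : u < r.
    rewrite -(ltr_pM2l hLp) hLu; nra.
  have hs1 : s < 1.
    by rewrite /s ltr_pdivrMr // mul1r.
  have := hT s (ltW hs0); have := hxmin (x + s *: p) => hm hTs.
  have hmain : s * a - s ^+ 2 * b / 2 <= Q / 2 + nu * Q / 6 + L * s ^+ 3 * r ^+ 3 / 6.
    lra.
  have h1 : s ^+ 2 * b <= s * (3 / 2 * a).
    have : s ^+ 2 * b <= s ^+ 2 * (3 / 2 * a) by apply: ler_wpM2l => //; rewrite sqr_ge0.
    have : s ^+ 2 * (3 / 2 * a) <= s * (3 / 2 * a).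
      have hq : 0 <= s * (3 / 2 * a) by nra.
      have := ler_wpM2r hq (ltW hs1).
      have -> : s ^+ 2 * (3 / 2 * a) = s * (s * (3 / 2 * a)) by ring.
      by rewrite mul1r.
    lra.
  have h2 : s * (2 / 3 * (lmin * rr)) <= s * a by apply: ler_wpM2l => //; exact: ltW.
  have h3 : s * (2 / 3 * (lmin * rr)) = 2 / 3 * lmin * u * r.
    by rewrite -hr2 -hsr; ring.
  have h4 : lmin * u * r / 6 <= Q / 2 + nu * Q / 6 + L * s ^+ 3 * r ^+ 3 / 6.
    lra.
  have hL2 : 0 < L ^+ 2 by rewrite exprn_gt0.
  have := ler_wpM2l (ltW hL2) h4.
  have -> : L ^+ 2 * (lmin * u * r / 6) = lmin * (L * u) * (L * r) / 6 by ring.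
  have -> : L ^+ 2 * (Q / 2 + nu * Q / 6 + L * s ^+ 3 * r ^+ 3 / 6)
      = (L ^+ 2 * Q) * (1 / 2 + nu / 6) + (L * (s * r)) ^+ 3 / 6 by ring.
  rewrite hsr hLu => h5.
  have h6 : (L ^+ 2 * Q) * (1 / 2 + nu / 6) <= (nu ^+ 2 * lmin ^+ 3) * (1 / 2 + nu / 6).
    by apply: ler_wpM2r => //; lra.
  have h7 : lmin * (2 * nu * lmin) * (3 * nu * lmin) / 6 < lmin * (2 * nu * lmin) * (L * r) / 6.
    rewrite ltr_pM2r ?ltr_pM2l //; do 3 (apply: mulr_gt0 => //).
  have h8 : (2 * nu * lmin) ^+ 3 / 6 <= nu ^+ 2 * lmin ^+ 3 * (4 / 9).
    have -> : (2 * nu * lmin) ^+ 3 / 6 = nu ^+ 2 * lmin ^+ 3 * (4 / 3 * nu) by field.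
    apply: ler_wpM2l; first by rewrite mulr_ge0 // ?sqr_ge0 // exprn_ge0 // ltW.
    lra.
  have h9 : nu ^+ 2 * lmin ^+ 3 * (nu / 6) <= nu ^+ 2 * lmin ^+ 3 * (1 / 18).
    apply: ler_wpM2l; first by rewrite mulr_ge0 // ?sqr_ge0 // exprn_ge0 // ltW.
    lra.
  have e7 : lmin * (2 * nu * lmin) * (3 * nu * lmin) / 6 = nu ^+ 2 * lmin ^+ 3 by field.
  have e6 : (nu ^+ 2 * lmin ^+ 3) * (1 / 2 + nu / 6) =
      nu ^+ 2 * lmin ^+ 3 * (1 / 2) + nu ^+ 2 * lmin ^+ 3 * (nu / 6) by ring.
  move: h5 h6 h7 h8 h9 e7 e6.
  set X := nu ^+ 2 * lmin ^+ 3.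
  set Y := lmin * (2 * nu * lmin) * (L * r) / 6.
  set Z := L ^+ 2 * Q * (1 / 2 + nu / 6).
  set W := (2 * nu * lmin) ^+ 3 / 6.
  set V := lmin * (2 * nu * lmin) * (3 * nu * lmin) / 6.
  set T := X * (nu / 6).
  move=> h5 h6 h7 h8 h9 e7 e6.
  clear -h5 h6 h7 h8 h9 e7 e6.
  lra.
have hT1 := hT 1 ler01.
rewrite scale1r !expr1n !mul1r mulr1 in hT1.
have hLr2 : L * r <= (1 - 2 * beta) * lmin.
  apply: (le_trans hLr).
  have := ler_wpM2r (ltW hlmin) (_ : 3 * nu <= 1 - 2 * beta); last by lra.
have hc3 : L * r ^+ 3 <= (1 - 2 * beta) * b.
  have -> : L * r ^+ 3 = (L * r) * r ^+ 2 by ring.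
  rewrite hr2.
  apply: (le_trans (ler_wpM2r hrr hLr2)).
  have h : 0 <= 1 - 2 * beta by lra.
  have := ler_wpM2l h hbr; rewrite mulrA; lra.
have hbB : b <= (3 / 2 - beta) * a.
  have h1 : 1 <= (3 / 2 - beta) * (1 - psi) by nra.
  have h2 : b <= (3 / 2 - beta) * ((1 - psi) * b).
    rewrite mulrA; have := ler_wpM2r hbp h1; rewrite mul1r; lra.
  apply: (le_trans h2); apply: ler_wpM2l => //; lra.
rewrite hga.
have h3 : b * (2 - beta) <= (3 / 2 - beta) * a * (2 - beta).
  apply: ler_wpM2r => //; lra.
have h4 : (3 / 2 - beta) * a * (2 - beta) <= 3 * (1 - beta) * a.
  have -> : (3 / 2 - beta) * a * (2 - beta) = 3 * (1 - beta) * a + (beta * (beta - 1 / 2)) * a by field.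
  have : beta * (beta - 1 / 2) * a <= 0.
    apply: mulr_le0_ge0 => //; apply: mulr_ge0_le0; lra.
  lra.
clear -hT1 hc3 h3 h4.
lra.
Qed.
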